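(* Let $\mathbf{X}\in\{0,1\}^{m\times n}$ and let $Q\subsetneq\mathrm{supp}(\mathbf{X})$ be nonempty. If the generalised binary matrix $\mathbf{X}^Q$ is minimally non-firm and $\mathbf{X}^P$ is firm for every $P\subsetneq Q$, then $\mathcal{S}^Q(\mathbf{X})\in\{0,1\}^{(m+|Q|)\times(n+|Q|)}$ is minimally non-firm.
   Context: A generalised binary matrix is a matrix with entries in $\{0,1,?\}$; a standard binary matrix has entries in $\{0,1\}$. For such $\mathbf{Y}$, $\mathrm{supp}(\mathbf{Y})=\{(i,j):y_{i,j}=1\}$. A submatrix indexed by $I\times J$ is obtained by deleting rows not in $I$ and columns not in $J$; it is proper if it omits at least one row or column. A rectangle of $\mathbf{Y}$ is a set $I\times J$ of positions containing no entry equal to $0$. An isolated set is a subset of $\mathrm{supp}(\mathbf{Y})$ no two distinct elements of which lie in a common rectangle; $i(\mathbf{Y})$ is the maximum size of an isolated set; $br(\mathbf{Y})$ is the minimum number of rectangles whose union contains $\mathrm{supp}(\mathbf{Y})$ ($?$ entries need not be covered). $\mathbf{Y}$ is firm if $i(\mathbf{Y}')=br(\mathbf{Y}')$ for every submatrix $\mathbf{Y}'$ including $\mathbf{Y}$; $\mathbf{Y}$ is minimally non-firm if $i(\mathbf{Y})<br(\mathbf{Y})$ and $i(\mathbf{Y}')=br(\mathbf{Y}')$ for every proper submatrix $\mathbf{Y}'$. For $\mathbf{X}\in\{0,1\}^{m\times n}$ and $P\subseteq\mathrm{supp}(\mathbf{X})$, $\mathbf{X}^P$ is the generalised binary matrix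 obtained from $\mathbf{X}$ by replacing every entry in $P$ by $?$ (so $\mathbf{X}^\emptyset=\mathbf{X}$). Stretching: for nonempty $Q=\{(\ell_1,k_1),\dots,(\ell_q,k_q)\}\subseteq\mathrm{supp}(\mathbf{X})$ listed in lexicographic order (row index, then column index), $\mathcal{S}^Q(\mathbf{X})$ is the $(m+q)\times(n+q)$ binary matrix whose top-left $m\times n$ block is $\mathbf{X}$, whose entries at $(\ell_t,n+t)$, $(m+t,k_t)$, $(m+t,n+t)$ equal $1$ for each $t\in[q]$, and all of whose other entries are $0$. *)

(* Defs.v *)
From mathcomp Require Import all_boot.
Set Implicit Arguments. Unset Strict Implicit. Unset Printing Implicit Defensive.
From mathcomp Require Import all_algebra.

(* Entries of a generalised binary matrix: 0, 1, ? *)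
Inductive gbit := G0 | G1 | GQ.
Definition is0 (x : gbit) : bool := if x is G0 then true else false.
Definition is1 (x : gbit) : bool := if x is G1 then true else false.

Notation gmat m n := 'M[gbit]_(m, n).

Section Defs.
Variables (m n : nat).

Definition supp (Y : gmat m n) : {set 'I_m * 'I_n} :=
  [set p | is1 (Y p.1 p.2)].

Definition inR (p : 'I_m * 'I_n) (R : {set 'I_m} * {set 'I_n}) : bool :=
  (p.1 \in R.1) && (p.2 \in R.2).

Definition rect (Y : gmat m n) (R : {set 'I_m} * {set 'I_n}) : bool :=
  [forall i in R.1, forall j in R.2, ~~ is0 (Y i j)].

Definition isolated (Y : gmat m n) (S : {set 'I_m * 'I_n}) : bool :=
  (S \subset supp Y) &&
  [forall s in S, forall t in S,
     (s != t) ==> ~~ [exists R, rect Y R && inR s R && inR t R]].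

Definition isol_num (Y : gmat m n) : nat :=
  \max_(S : {set 'I_m * 'I_n} | isolated Y S) #|S|.

Definition rect_cover (Y : gmat m n) (F : {set {set 'I_m} * {set 'I_n}}) : bool :=
  [forall R in F, rect Y R] && [forall p in supp Y, exists R in F, inR p R].

(* br(Y): minimum number of rectangles covering supp Y.  The default value
   #|supp Y| is attained by the cover by singleton rectangles, so this is
   exactly the minimum. *)
Definition br (Y : gmat m n) : nat :=
  \big[minn/#|supp Y|]_(F : {set {set 'I_m} * {set 'I_n}} | rect_cover Y F) #|F|.

End Defs.

(* submatrix indexed by I x J (rows/columns kept in increasing order) *)
Definition submx (m n : nat) (Y : gmat m n) (I : {set 'I_m}) (J : {set 'I_n})
  : gmat #|I| #|J| :=
  \matrix_(a < #|I|, b < #|J|) Y (enum_val a) (enum_val b).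

Definition firm (m n : nat) (Y : gmat m n) : Prop :=
  forall (I : {set 'I_m}) (J : {set 'I_n}),
    isol_num (submx Y I J) = br (submx Y I J).

Definition minimally_nonfirm (m n : nat) (Y : gmat m n) : Prop :=
  isol_num Y < br Y /\
  forall (I : {set 'I_m}) (J : {set 'I_n}),
    (I != setT) || (J != setT) ->
    isol_num (submx Y I J) = br (submx Y I J).

Definition bsupp (m n : nat) (X : 'M[bool]_(m, n)) : {set 'I_m * 'I_n} :=
  [set p | X p.1 p.2].

(* X^P : replace the entries in P by ? (X^set0 is X viewed as generalised) *)
Definition qmark (m n : nat) (X : 'M[bool]_(m, n)) (P : {set 'I_m * 'I_n})
  : gmat m n :=
  \matrix_(i, j) (if (i, j) \in P then GQ else if X i j then G1 else G0).

Definition lexle (m n : nat) (p q : 'I_m * 'I_n) : bool :=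
  (p.1 < q.1) || ((p.1 == q.1) && (p.2 <= q.2)).

(* Q listed in lexicographic order: (l_1,k_1), ..., (l_q,k_q) *)
Definition lexlist (m n : nat) (Q : {set 'I_m * 'I_n}) : seq ('I_m * 'I_n) :=
  sort (@lexle m n) (enum Q).

(* the t-th element (0-based) of the list, as an option *)
Definition qnth (m n : nat) (Q : {set 'I_m * 'I_n}) (t : nat) : option ('I_m * 'I_n) :=
  nth None [seq Some p | p <- lexlist Q] t.

Definition stretch (m n : nat) (X : 'M[bool]_(m, n)) (Q : {set 'I_m * 'I_n})
  : 'M[bool]_(m + #|Q|, n + #|Q|) :=
  \matrix_(r, c)
    match split r, split c with
    | inl i, inl j => X i j
    | inl i, inr t => omap fst (qnth Q t) == Some i
    | inr t, inl j => omap snd (qnth Q t) == Some j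
    | inr t, inr t' => t == t'
    end.

(* Main.v *)
Require Import Defs.
From mathcomp Require Import all_boot all_algebra.
Set Implicit Arguments. Unset Strict Implicit. Unset Printing Implicit Defensive.

Section Generic.
Variables (M N : nat) (Y : gmat M N).
Implicit Types (U W S : {set 'I_M * 'I_N}) (F : {set {set 'I_M} * {set 'I_N}}) (I : {set 'I_M}) (J : {set 'I_N}).

Definition compat (s t : 'I_M * 'I_N) := [exists R, rect Y R && inR s R && inR t R].
Definition iso S := [forall s in S, forall t in S, (s != t) ==> ~~ compat s t].
Definition iU U := \max_(S : {set 'I_M * 'I_N} | (S \subset U) && iso S) #|S|.
Definition coverU U F :=
  [forall R in F, rect Y R] && [forall p in U, exists R in F, inR p R].
Definition brU U := \big[minn/#|U|]_(F : {set {set 'I_M} * {set 'I_N}} | coverU U F) #|F|.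
Definition nz := [set p | ~~ is0 (Y p.1 p.2)].
Definition UIJ (I : {set 'I_M}) (J : {set 'I_N}) := supp Y :&: setX I J.

Lemma isol_numE : isol_num Y = iU (supp Y).
Proof. by []. Qed.

Lemma brE : br Y = brU (supp Y).
Proof. by []. Qed.

Lemma supp_nz : supp Y \subset nz.
Proof. by apply/subsetP=> p; rewrite !inE; case: (Y _ _). Qed.

Lemma UIJ_nz I J : UIJ I J \subset nz.
Proof. exact: subset_trans (subsetIl _ _) supp_nz. Qed.

Lemma compat_sym s t : compat s t = compat t s.
Proof.
by apply/existsP/existsP=> [] [R /andP[/andP[rR sR] tR]]; exists R; rewrite rR sR tR.
Qed.

Lemma compat_corner s t : compat s t -> ~~ is0 (Y s.1 t.2).
Proof.
case/existsP=> R /andP[/andP[rR /andP[s1 _]] /andP[_ t2]].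
by move/forallP: rR => /(_ s.1); rewrite s1 /= => /forallP /(_ t.2); rewrite t2.
Qed.

Lemma compat_rect R s t : rect Y R -> inR s R -> inR t R -> compat s t.
Proof. by move=> rR sR tR; apply/existsP; exists R; rewrite rR sR tR. Qed.

Lemma isoS S1 S2 : S1 \subset S2 -> iso S2 -> iso S1.
Proof.
move=> /subsetP sub /forallP h; apply/forallP=> s; apply/implyP=> sS.
apply/forallP=> t; apply/implyP=> tS.
by move: (h s); rewrite (sub _ sS) /= => /forallP /(_ t); rewrite (sub _ tS).
Qed.

Lemma isoP S : reflect (forall s t, s \in S -> t \in S -> s != t -> ~~ compat s t) (iso S).
Proof.
apply: (iffP forallP) => [h s t sS tS st|h s].
  by move: (h s); rewrite sS /= => /forallP /(_ t); rewrite tS st.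
apply/implyP=> sS; apply/forallP=> t; apply/implyP=> tS; apply/implyP; exact: h.
Qed.

Lemma iU_ge U S : S \subset U -> iso S -> #|S| <= iU U.
Proof. by move=> sU iS; apply: (@leq_bigmax_cond _ (fun S => (S \subset U) && iso S)); rewrite sU. Qed.

Lemma iU_ex U : exists S, [/\ S \subset U, iso S & #|S| = iU U].
Proof.
have : 0 < #|[pred S : {set 'I_M * 'I_N} | (S \subset U) && iso S]|.
  apply/card_gt0P; exists set0; rewrite inE sub0set /=.
  by apply/isoP=> s t; rewrite inE.
move/(eq_bigmax_cond (fun S : {set 'I_M * 'I_N} => #|S|)) => [S].
rewrite inE => /andP[sU iS] e; exists S; split=> //.
Qed.

Lemma brU_le U F : coverU U F -> brU U <= #|F|.
Proof.
move=> cF; rewrite /brU unlock.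
have : F \in index_enum {set {set 'I_M} * {set 'I_N}} by rewrite mem_index_enum.
elim: (index_enum _) => //= a l IH; rewrite inE => /orP[/eqP<-|Fl].
  by rewrite /applybig /= cF geq_minl.
rewrite /applybig /=; case: (coverU U a) => //; last exact: IH.
exact: leq_trans (geq_minr _ _) (IH Fl).
Qed.

Lemma brU_ex U : U \subset nz -> exists F, coverU U F /\ #|F| = brU U.
Proof.
move=> Unz.
have : brU U = #|U| \/ exists F, coverU U F /\ brU U = #|F|.
  rewrite /brU; elim/big_ind: _ => [|x y hx hy|F cF]; [by left| |by right; exists F].
  by case: (leqP x y).
case=> [e|[F [cF e]]]; last by exists F.
exists [set ([set p.1], [set p.2]) | p in U]; split; last first.
  rewrite e card_imset // => p p' [] /set1_inj e1 /set1_inj e2.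
  by case: p p' e1 e2 => [??] [??] /= -> ->.
apply/andP; split.
  apply/forallP=> R; apply/implyP=> /imsetP[p pU ->].
  apply/forallP=> i; apply/implyP; rewrite inE => /eqP->.
  apply/forallP=> j; apply/implyP; rewrite inE => /eqP->.
  by move/subsetP: Unz => /(_ p pU); rewrite inE.
apply/forallP=> p; apply/implyP=> pU; apply/existsP; exists ([set p.1], [set p.2]).
by rewrite imset_f //= /inR /= !inE !eqxx.
Qed.

Lemma pendant U W x K : U \subset nz -> x \in U -> x \notin W -> W \subset U ->
  rect Y K -> inR x K ->
  (forall s, s \in U -> s \notin W -> inR s K) ->
  (forall s, s \in W -> ~~ compat x s) ->
  iU U = (iU W).+1 /\ brU U = (brU W).+1.
Proof.
move=> Unz xU xW WU rK xK hK hW.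
have Wnz : W \subset nz by apply: subset_trans Unz.
split; apply/eqP; rewrite eqn_leq; apply/andP; split.
- have [S [sU iS <-]] := iU_ex U.
  rewrite -(cardsID W S) -addn1 leq_add //.
    apply: iU_ge; first exact: subsetIr.
    by apply: isoS iS; apply: subsetIl.
  apply/card_le1_eqP=> s t; rewrite !inE => /andP[sW sS] /andP[tW tS].
  apply/eqP; apply: contraT => st; move/isoP: iS => /(_ _ _ _ _ st).
  by rewrite (compat_rect rK) ?(hK s) ?(hK t) // ?(subsetP sU) //; apply.
- have [S [sW iS <-]] := iU_ex W.
  have xS : x \notin S by apply: contra xW; apply/subsetP.
  apply: (@leq_trans #|x |: S|); first by rewrite cardsU1 xS.
  apply: iU_ge.
    by rewrite subUset sub1set xU (subset_trans sW).
  apply/isoP=> s t; rewrite !inE => /orP[/eqP->|sS] /orP[/eqP->|tS] st.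
  + by rewrite eqxx in st.
  + exact: hW (subsetP sW _ tS).
  + by rewrite compat_sym; exact: hW (subsetP sW _ sS).
  + by move/isoP: iS; apply.
- have [F [cF <-]] := brU_ex Wnz.
  apply: (@leq_trans #|K |: F|); last by rewrite cardsU1 addnC -addn1 leq_add2l leq_b1.
  apply: brU_le; case/andP: cF => /forallP rF /forallP cF.
  apply/andP; split.
    apply/forallP=> R; apply/implyP; rewrite !inE => /orP[/eqP->//|RF].
    by move: (rF R); rewrite RF.
  apply/forallP=> p; apply/implyP=> pU; case pW: (p \in W).
    move: (cF p); rewrite pW => /existsP[R /andP[RF pR]].
    by apply/existsP; exists R; rewrite !inE RF orbT.
  by apply/existsP; exists K; rewrite !inE eqxx /= hK ?pW.
- have [F [cF <-]] := brU_ex Unz.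
  case/andP: cF => /forallP rF /forallP cF.
  move: (cF x); rewrite xU => /existsP[R /andP[RF xR]].
  rewrite (cardsD1 R F) RF add1n ltnS; apply: brU_le.
  apply/andP; split.
    apply/forallP=> R'; apply/implyP; rewrite inE => /andP[_ R'F].
    by move: (rF R'); rewrite R'F.
  apply/forallP=> p; apply/implyP=> pW.
  move: (cF p); rewrite (subsetP WU _ pW) => /existsP[R' /andP[R'F pR']].
  apply/existsP; exists R'; rewrite !inE R'F pR' andbT /=.
  rewrite andbT; apply: contraNneq (hW p pW) => e; rewrite e in pR'.
  by apply: (compat_rect (R := R)) => //; move: (rF R); rewrite RF.
Qed.

Lemma inUIJ p I J : (p \in UIJ I J) = [&& is1 (Y p.1 p.2), p.1 \in I & p.2 \in J].
Proof. by rewrite !inE. Qed.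

Lemma is1_nz (z : gbit) : is1 z -> ~~ is0 z.
Proof. by case: z. Qed.

Lemma row_pendant I J r c : r \in I -> c \in J -> is1 (Y r c) ->
  (forall j, j \in J -> ~~ is0 (Y r j) -> j = c) ->
  iU (UIJ I J) = (iU (UIJ I (J :\ c))).+1 /\
  brU (UIJ I J) = (brU (UIJ I (J :\ c))).+1.
Proof.
move=> rI cJ rc hr.
apply: (pendant (x := (r, c)) (K := ([set i | ~~ is0 (Y i c)], [set c]))).
- exact: UIJ_nz.
- by rewrite inUIJ /= rc rI cJ.
- by rewrite inUIJ /= !inE eqxx !andbF.
- by apply/subsetP => s; rewrite !inUIJ !inE => /and3P[-> -> /andP[_ ->]].
- apply/forallP=> i; apply/implyP; rewrite inE => hi.
  by apply/forallP=> j; apply/implyP; rewrite inE => /eqP->.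
- by rewrite /inR /= !inE eqxx is1_nz.
- move=> s; rewrite !inUIJ !inE => /and3P[s1 sI sJ].
  rewrite s1 sI sJ /= !andbT => /negPn/eqP e.
  by rewrite /inR /= !inE -e is1_nz //= eqxx.
- move=> s; rewrite inUIJ !inE => /and3P[_ _ /andP[sc sJ]].
  apply/negP=> /compat_corner /= /(hr _ sJ) e.
  by rewrite e eqxx in sc.
Qed.

Lemma col_pendant I J r c : r \in I -> c \in J -> is1 (Y r c) ->
  (forall i, i \in I -> ~~ is0 (Y i c) -> i = r) ->
  iU (UIJ I J) = (iU (UIJ (I :\ r) J)).+1 /\
  brU (UIJ I J) = (brU (UIJ (I :\ r) J)).+1.
Proof.
move=> rI cJ rc hc.
apply: (pendant (x := (r, c)) (K := ([set r], [set j | ~~ is0 (Y r j)]))).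
- exact: UIJ_nz.
- by rewrite inUIJ /= rc rI cJ.
- by rewrite inUIJ /= !inE eqxx /= andbF.
- by apply/subsetP => s; rewrite !inUIJ !inE => /and3P[-> /andP[_ ->] ->].
- apply/forallP=> i; apply/implyP; rewrite inE => /eqP->.
  by apply/forallP=> j; apply/implyP; rewrite inE.
- by rewrite /inR /= !inE eqxx is1_nz.
- move=> s; rewrite !inUIJ !inE => /and3P[s1 sI sJ].
  rewrite s1 sI sJ /= !andbT => /negPn/eqP e.
  by rewrite /inR /= !inE -e is1_nz //= eqxx.
- move=> s; rewrite inUIJ !inE => /and3P[_ /andP[sr sI] _].
  rewrite compat_sym; apply/negP=> /compat_corner /= /(hc _ sI) e.
  by rewrite e eqxx in sr.
Qed.

Lemma UIJ_zero_row I J r : (forall j, j \in J -> ~~ is1 (Y r j)) ->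
  UIJ I J = UIJ (I :\ r) J.
Proof.
move=> h; apply/setP=> s; rewrite !inUIJ !inE.
case: (eqVneq s.1 r) => [e|] //=; rewrite ?andbF //.
by case sJ: (s.2 \in J); rewrite ?andbF // andbT; rewrite -e in h; rewrite (negbTE (h _ sJ)).
Qed.

Lemma UIJ_zero_col I J c : (forall i, i \in I -> ~~ is1 (Y i c)) ->
  UIJ I J = UIJ I (J :\ c).
Proof.
move=> h; apply/setP=> s; rewrite !inUIJ !inE.
case: (eqVneq s.2 c) => [e|] //=; rewrite ?andbF //.
by case sI: (s.1 \in I); rewrite ?andbF //= -e in h *; rewrite (negbTE (h _ sI)).
Qed.
End Generic.

Section Transfer.
Variables (m1 n1 m2 n2 : nat) (Y1 : gmat m1 n1) (Y2 : gmat m2 n2).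
Variables (f : 'I_m1 -> 'I_m2) (g : 'I_n1 -> 'I_n2).
Hypotheses (finj : injective f) (ginj : injective g).
Hypothesis hY : forall a b, is0 (Y1 a b) = is0 (Y2 (f a) (g b)).
Definition hmap (p : 'I_m1 * 'I_n1) := (f p.1, g p.2).

Lemma hmap_inj : injective hmap.
Proof. by move=> [a b] [a' b'] [/finj -> /ginj ->]. Qed.

Lemma rect_img (R : {set 'I_m1} * {set 'I_n1}) : rect Y1 R -> rect Y2 (f @: R.1, g @: R.2).
Proof.
move=> rR; apply/forallP=> i; apply/implyP=> /imsetP[a aR ->].
apply/forallP=> j; apply/implyP=> /imsetP[b bR ->]; rewrite -hY.
by move/forallP: rR => /(_ a); rewrite aR => /forallP /(_ b); rewrite bR.
Qed.

Lemma rect_pre (R : {set 'I_m2} * {set 'I_n2}) : rect Y2 R -> rect Y1 (f @^-1: R.1, g @^-1: R.2).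
Proof.
move=> rR; apply/forallP=> a; apply/implyP; rewrite inE => aR.
apply/forallP=> b; apply/implyP; rewrite inE => bR; rewrite hY.
by move/forallP: rR => /(_ (f a)); rewrite aR => /forallP /(_ (g b)); rewrite bR.
Qed.

Lemma inR_img p (R : {set 'I_m1} * {set 'I_n1}) : inR p R -> inR (hmap p) (f @: R.1, g @: R.2).
Proof. by case/andP=> h1 h2; rewrite /inR /= !imset_f. Qed.

Lemma inR_pre p (R : {set 'I_m2} * {set 'I_n2}) : inR (hmap p) R -> inR p (f @^-1: R.1, g @^-1: R.2).
Proof. by case/andP=> h1 h2; rewrite /inR /= !inE h1 h2. Qed.

Lemma compat_transfer s t : compat Y2 (hmap s) (hmap t) = compat Y1 s t.
Proof.
apply/existsP/existsP => [[R /andP[/andP[rR sR] tR]]|[R /andP[/andP[rR sR] tR]]].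
  by exists (f @^-1: R.1, g @^-1: R.2); rewrite rect_pre // !inR_pre.
by exists (f @: R.1, g @: R.2); rewrite rect_img // !inR_img.
Qed.

Lemma iso_transfer (S : {set 'I_m1 * 'I_n1}) : iso Y2 (hmap @: S) = iso Y1 S.
Proof.
apply/isoP/isoP => h.
  move=> s t sS tS st; rewrite -compat_transfer; apply: h; rewrite ?imset_f //.
  by rewrite (inj_eq hmap_inj).
move=> s' t' /imsetP[s sS ->] /imsetP[t tS ->]; rewrite (inj_eq hmap_inj) => st.
by rewrite compat_transfer; apply: h.
Qed.

Lemma transfer (U : {set 'I_m1 * 'I_n1}) : U \subset nz Y1 ->
  iU Y1 U = iU Y2 (hmap @: U) /\ brU Y1 U = brU Y2 (hmap @: U).
Proof.
move=> Unz.
have hUnz : hmap @: U \subset nz Y2.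
  apply/subsetP=> p /imsetP[u uU ->]; move/subsetP: Unz => /(_ u uU).
  by rewrite !inE hY.
split; apply/eqP; rewrite eqn_leq; apply/andP; split.
- have [S [sU iS <-]] := iU_ex Y1 U.
  rewrite -(card_imset _ hmap_inj); apply: iU_ge; first exact: imsetS.
  by rewrite iso_transfer.
- have [S [sU iS <-]] := iU_ex Y2 (hmap @: U).
  have e : hmap @: (U :&: hmap @^-1: S) = S.
    apply/setP=> p; apply/imsetP/idP => [[u] |pS].
      by rewrite !inE => /andP[_ uS] ->.
    move/subsetP: sU => /(_ p pS) /imsetP[u uU e]; exists u => //.
    by rewrite !inE uU -e pS.
  rewrite -e card_imset; last exact: hmap_inj.
  apply: iU_ge; first exact: subsetIl.
  by rewrite -iso_transfer e.
- have [F [cF <-]] := brU_ex hUnz.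
  apply: (leq_trans _ (leq_imset_card (fun R : {set 'I_m2} * {set 'I_n2} => (f @^-1: R.1, g @^-1: R.2)) F)).
  apply: brU_le; case/andP: cF => /forallP rF /forallP cF; apply/andP; split.
    apply/forallP=> R'; apply/implyP=> /imsetP[R RF ->]; apply: rect_pre.
    by move: (rF R); rewrite RF.
  apply/forallP=> u; apply/implyP=> uU.
  move: (cF (hmap u)); rewrite imset_f // => /existsP[R /andP[RF uR]].
  by apply/existsP; exists (f @^-1: R.1, g @^-1: R.2); rewrite imset_f // inR_pre.
- have [F [cF <-]] := brU_ex Unz.
  apply: (leq_trans _ (leq_imset_card (fun R : {set 'I_m1} * {set 'I_n1} => (f @: R.1, g @: R.2)) F)).
  apply: brU_le; case/andP: cF => /forallP rF /forallP cF; apply/andP; split.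
    apply/forallP=> R'; apply/implyP=> /imsetP[R RF ->]; apply: rect_img.
    by move: (rF R); rewrite RF.
  apply/forallP=> p; apply/implyP=> /imsetP[u uU ->].
  move: (cF u); rewrite uU => /existsP[R /andP[RF uR]].
  by apply/existsP; exists (f @: R.1, g @: R.2); rewrite imset_f // inR_img.
Qed.
End Transfer.

Lemma subE M N (Y : gmat M N) (I : {set 'I_M}) (J : {set 'I_N}) :
  isol_num (Defs.submx Y I J) = iU Y (UIJ Y I J) /\ br (Defs.submx Y I J) = brU Y (UIJ Y I J).
Proof.
have hY : forall a b, is0 (Defs.submx Y I J a b) = is0 (Y (enum_val a) (enum_val b)).
  by move=> a b; rewrite mxE.
have [e1 e2] := transfer (@enum_val_inj _ _) (@enum_val_inj _ _) hY (supp_nz (Defs.submx Y I J)).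
rewrite isol_numE brE e1 e2.
suff -> : hmap enum_val enum_val @: supp (Defs.submx Y I J) = UIJ Y I J by [].
apply/setP=> p; apply/imsetP/idP => [[[a b]] |].
  by rewrite !inE mxE /= => ab ->; rewrite ab !enum_valP.
case: p => i j; rewrite inUIJ /= => /and3P[ij iI jJ].
exists (enum_rank_in iI i, enum_rank_in jJ j); last by rewrite /hmap /= !enum_rankK_in.
by rewrite !inE mxE /= !enum_rankK_in.
Qed.


Section Stretch.
Variables (m n : nat) (X : 'M[bool]_(m, n)) (Q : {set 'I_m * 'I_n}).
Hypothesis hQ : Q \subset bsupp X.
Variable p0 : 'I_m * 'I_n.
Local Notation q := #|Q|.
Definition Z := qmark (stretch X Q) set0.
Definition gq (t : 'I_q) := nth p0 (lexlist Q) t.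

Lemma size_lexlist : size (lexlist Q) = q.
Proof. by rewrite /lexlist size_sort cardE. Qed.

Lemma qnthE (t : 'I_q) : qnth Q t = Some (gq t).
Proof. by rewrite /qnth (nth_map p0) // size_lexlist. Qed.

Lemma gq_inj : injective gq.
Proof.
move=> t t' /eqP; rewrite /gq nth_uniq ?size_lexlist //.
  by move/eqP/val_inj.
by rewrite /lexlist sort_uniq enum_uniq.
Qed.

Lemma gqQ t : gq t \in Q.
Proof.
by rewrite /gq -mem_enum -(mem_sort (@lexle m n)) mem_nth // -/(lexlist Q) size_lexlist.
Qed.

Lemma gq_img : gq @: setT = Q.
Proof.
apply/eqP; rewrite eqEcard card_imset; last exact: gq_inj.
rewrite cardsT card_ord leqnn andbT.
by apply/subsetP=> p /imsetP[t _ ->]; apply: gqQ.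
Qed.

Lemma gqX t : X (gq t).1 (gq t).2.
Proof. by move/subsetP: hQ => /(_ _ (gqQ t)); rewrite inE. Qed.

Let sl (a b : nat) (i : 'I_a) : split (lshift b i) = inl i := unsplitK (inl _ i).
Let sr (a b : nat) (i : 'I_b) : split (rshift a i) = inr i := unsplitK (inr _ i).

Lemma Sll i j : stretch X Q (lshift q i) (lshift q j) = X i j.
Proof. by rewrite mxE !sl. Qed.
Lemma Slr i t : stretch X Q (lshift q i) (rshift n t) = ((gq t).1 == i).
Proof. by rewrite mxE sl sr qnthE. Qed.
Lemma Srl t j : stretch X Q (rshift m t) (lshift q j) = ((gq t).2 == j).
Proof. by rewrite mxE sl sr qnthE. Qed.
Lemma Srr t t' : stretch X Q (rshift m t) (rshift n t') = (t == t').
Proof. by rewrite mxE !sr. Qed.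

Lemma is1Z i j : is1 (Z i j) = stretch X Q i j.
Proof. by rewrite mxE in_set0; case: (stretch X Q i j). Qed.
Lemma is0Z i j : is0 (Z i j) = ~~ stretch X Q i j.
Proof. by rewrite mxE in_set0; case: (stretch X Q i j). Qed.

Lemma rowR t j : stretch X Q (rshift m t) j -> j = lshift q (gq t).2 \/ j = rshift n t.
Proof.
case: (split_ordP j) => j' ->; first by rewrite Srl => /eqP->; left.
by rewrite Srr => /eqP->; right.
Qed.

Lemma colR t i : stretch X Q i (rshift n t) -> i = lshift q (gq t).1 \/ i = rshift m t.
Proof.
case: (split_ordP i) => i' ->; first by rewrite Slr => /eqP->; left.
by rewrite Srr => /eqP->; right.
Qed.

Definition rowsOf (I1 : {set 'I_m}) (P : {set 'I_q}) : {set 'I_(m + q)} :=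
  lshift q @: I1 :|: @rshift m q @: P.
Definition colsOf (J1 : {set 'I_n}) (P : {set 'I_q}) : {set 'I_(n + q)} :=
  lshift q @: J1 :|: @rshift n q @: P.
Definition lsh (p : 'I_m * 'I_n) : 'I_(m + q) * 'I_(n + q) := (lshift q p.1, lshift q p.2).

Lemma lsh_inj : injective lsh.
Proof. by move=> [a b] [a' b'] [e1 e2]; by congr pair; apply: val_inj. Qed.

Lemma rows_l I1 P i : (lshift q i \in rowsOf I1 P) = (i \in I1).
Proof.
rewrite inE mem_imset; last exact: lshift_inj.
by case: (i \in I1) => //=; apply/imsetP=> [[t _ /eqP]]; rewrite eq_lrshift.
Qed.
Lemma rows_r I1 P t : (rshift m t \in rowsOf I1 P) = (t \in P).
Proof.
rewrite inE (mem_imset _ _ (@rshift_inj _ _)).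
by case: (t \in P); rewrite ?orbT //= orbF; apply/imsetP=> [[i _ /eqP]]; rewrite eq_rlshift.
Qed.
Lemma cols_l J1 P j : (lshift q j \in colsOf J1 P) = (j \in J1).
Proof.
rewrite inE mem_imset; last exact: lshift_inj.
by case: (j \in J1) => //=; apply/imsetP=> [[t _ /eqP]]; rewrite eq_lrshift.
Qed.
Lemma cols_r J1 P t : (rshift n t \in colsOf J1 P) = (t \in P).
Proof.
rewrite inE (mem_imset _ _ (@rshift_inj _ _)).
by case: (t \in P); rewrite ?orbT //= orbF; apply/imsetP=> [[i _ /eqP]]; rewrite eq_rlshift.
Qed.

Lemma rows_D1 I1 P t i : (i \in rowsOf I1 (P :\ t)) = (i != rshift m t) && (i \in rowsOf I1 P).
Proof.
case: (split_ordP i) => i' ->; first by rewrite !rows_l (eq_lrshift i' t) andTb.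
by rewrite (rows_r I1 (P :\ t) i') (rows_r I1 P i') (inj_eq (@rshift_inj _ _)) !inE.
Qed.
Lemma cols_D1 J1 P t j : (j \in colsOf J1 (P :\ t)) = (j != rshift n t) && (j \in colsOf J1 P).
Proof.
case: (split_ordP j) => j' ->; first by rewrite !cols_l (eq_lrshift j' t) andTb.
by rewrite (cols_r J1 (P :\ t) j') (cols_r J1 P j') (inj_eq (@rshift_inj _ _)) !inE.
Qed.

Definition UA I1 J1 P (H : {set 'I_m * 'I_n}) :=
  UIJ Z (rowsOf I1 P) (colsOf J1 P) :\: lsh @: H.

Lemma notin_lsh (H : {set 'I_m * 'I_n}) i j :
  (i, j) \in lsh @: H -> exists a b, [/\ i = lshift q a, j = lshift q b & (a, b) \in H].
Proof. by case/imsetP=> [[a b] abH [-> ->]]; exists a, b. Qed.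

Lemma gadgets I1 J1 (P : {set 'I_q}) (H : {set 'I_m * 'I_n}) :
  iU Z (UA I1 J1 P H) = iU Z (UA I1 J1 set0 (H :|: gq @: P)) + #|P| /\
  brU Z (UA I1 J1 P H) = brU Z (UA I1 J1 set0 (H :|: gq @: P)) + #|P|.
Proof.
move hk: #|P| => k; elim: k P H hk => [|k IH] P H hk.
  by rewrite (cards0_eq hk) imset0 setU0 !addn0.
have [t tP] : exists t, t \in P by apply/card_gt0P; rewrite hk.
have hk' : #|P :\ t| = k by move: hk; rewrite (cardsD1 t P) tP add1n => [[]].
have eH : (gq t |: H) :|: gq @: (P :\ t) = H :|: gq @: P.
  by rewrite -(setD1K tP) imsetU1 setD1K // setUA (setUC _ H) -setUA.
have [e1 e2] := IH (P :\ t) (gq t |: H) hk'; rewrite eH in e1 e2.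
set x := (rshift m t, rshift n t).
set K := ([set lshift q (gq t).1; rshift m t], [set lshift q (gq t).2; rshift n t]).
have [f1 f2] : iU Z (UA I1 J1 P H) = (iU Z (UA I1 J1 (P :\ t) (gq t |: H))).+1 /\
               brU Z (UA I1 J1 P H) = (brU Z (UA I1 J1 (P :\ t) (gq t |: H))).+1.
  apply: (pendant (x := x) (K := K)).
  - exact: subset_trans (subsetDl _ _) (UIJ_nz _ _ _).
  - rewrite inE inUIJ /= is1Z Srr eqxx (rows_r I1 P t) (cols_r J1 P t) tP.
    by rewrite !andbT; apply/negP=> /imsetP[[a b] _ /(congr1 fst) /= /eqP]; rewrite eq_rlshift.
  - by rewrite inE inUIJ /= (rows_r I1 (P :\ t) t) !inE eqxx /= !andbF.
  - apply/subsetP=> [[i j]]; rewrite !in_setD !inUIJ /= => /andP[hH /and3P[-> iP jP]].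
    rewrite rows_D1 in iP; rewrite cols_D1 in jP; case/andP: iP => _ ->; case/andP: jP => _ ->.
    by rewrite !andbT; apply: contra hH; apply: (subsetP (imsetS _ (subsetUr _ _))).
  - apply/forallP=> i; apply/implyP; rewrite !inE => /orP[] /eqP->;
    apply/forallP=> j; apply/implyP; rewrite !inE => /orP[] /eqP->;
    by rewrite is0Z ?Sll ?Slr ?Srl ?Srr ?eqxx ?gqX.
  - by rewrite /inR /= !inE !eqxx !orbT.
  - move=> [i j]; rewrite !in_setD !inUIJ /= => /andP[hH /and3P[ij iP jP]].
    rewrite (rows_D1 I1 P t i) (cols_D1 J1 P t j) iP jP ij !andbT /inR /= !inE.
    rewrite is1Z in ij.
    case: (eqVneq i (rshift m t)) => [ei|ni].
      move=> _; rewrite orbT /=; rewrite ei in ij.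
      by case: (rowR ij) => ->; rewrite eqxx ?orbT.
    case: (eqVneq j (rshift n t)) => [ej|nj].
      move=> _; rewrite orbT andbT; rewrite ej in ij.
      by case: (colR ij) => ei; [rewrite ei eqxx | rewrite ei eqxx in ni].
    rewrite imsetU1 in_setU (negbTE hH) orbF !andbT negbK => /set1P[-> ->].
    by rewrite !eqxx.
  - move=> [i j]; rewrite !in_setD !inUIJ /= => /andP[hH /and3P[ij iP jP]].
    apply/negP=> cx.
    have := compat_corner cx; rewrite is0Z negbK /= => /rowR [ej|ej]; last first.
      by rewrite ej cols_D1 eqxx in jP.
    move: cx; rewrite compat_sym => /compat_corner; rewrite is0Z negbK /= => /colR [ei|ei]; last first.
      by rewrite ei rows_D1 eqxx in iP.
    by move: hH; rewrite imsetU1 in_setU ei ej set11.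
by rewrite f1 f2 e1 e2 !addnS.
Qed.

Lemma gadget_base I1 J1 (H : {set 'I_m * 'I_n}) : H \subset Q ->
  iU Z (UA I1 J1 set0 H) = iU (qmark X H) (UIJ (qmark X H) I1 J1) /\
  brU Z (UA I1 J1 set0 H) = brU (qmark X H) (UIJ (qmark X H) I1 J1).
Proof.
move=> HQ.
have hY : forall a b, is0 (qmark X H a b) = is0 (Z (lshift q a) (lshift q b)).
  move=> a b; rewrite is0Z Sll mxE; case: ifP => [abH|_]; last by case: (X a b).
  by move/subsetP: hQ => /(_ (a, b) (subsetP HQ _ abH)); rewrite inE => ->.
have [e1 e2] := transfer (@lshift_inj _ _) (@lshift_inj _ _) hY (UIJ_nz (qmark X H) I1 J1).
suff ee : hmap (lshift q) (lshift q) @: UIJ (qmark X H) I1 J1 = UA I1 J1 set0 H.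
  by rewrite e1 e2 ee.
apply/setP=> [[i j]]; apply/imsetP/idP => [[[a b]]|].
  rewrite (inUIJ (qmark X H) (a, b) I1 J1) mxE /= => /and3P[hab aI bJ] [-> ->].
  rewrite in_setD inUIJ /= rows_l cols_l aI bJ is1Z Sll andbT.
  move: hab; case: ifP => // abH; case: (X a b) => // _; rewrite andbT.
  have -> : (lshift q a, lshift q b) = lsh (a, b) by [].
  by rewrite andbT (mem_imset _ _ lsh_inj) abH.
rewrite in_setD inUIJ /= => /andP[hH /and3P[ij iI jJ]].
move: iI jJ; rewrite /rowsOf /colsOf !imset0 !setU0.
move=> /imsetP[a aI ei] /imsetP[b bJ ej]; exists (a, b); last by rewrite /hmap ei ej.
rewrite inUIJ mxE /= aI bJ andbT.
have -> : (a, b) \in H = false.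
  by apply/negbTE; apply: contra hH => abH; rewrite ei ej -[(lshift q a, lshift q b)]/(lsh (a, b)) (mem_imset _ _ lsh_inj).
by move: ij; rewrite ei ej is1Z Sll => ->.
Qed.
End Stretch.


Section Main.
Variables (m n : nat) (X : 'M[bool]_(m, n)) (Q : {set 'I_m * 'I_n}).
Hypothesis hQ : Q \subset bsupp X.
Variable p0 : 'I_m * 'I_n.
Hypothesis hmin : minimally_nonfirm (qmark X Q).
Hypothesis hfirm : forall P : {set 'I_m * 'I_n}, P \proper Q -> firm (qmark X P).
Local Notation q := #|Q|.
Local Notation Z := (Z X Q).
Local Notation gq := (@gq m n Q p0).

Lemma rowsT : rowsOf (Q:=Q) setT setT = setT.
Proof.
apply/setP=> i; rewrite in_setT; case: (split_ordP i) => i' ->.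
  by rewrite rows_l in_setT.
by rewrite rows_r in_setT.
Qed.
Lemma colsT : colsOf (Q:=Q) setT setT = setT.
Proof.
apply/setP=> i; rewrite in_setT; case: (split_ordP i) => i' ->.
  by rewrite cols_l in_setT.
by rewrite cols_r in_setT.
Qed.

Lemma UIJT M N (Y : gmat M N) : UIJ Y setT setT = supp Y.
Proof. by apply/setP=> p; rewrite inUIJ !in_setT !andbT inE. Qed.

Lemma gqP_sub (P : {set 'I_q}) : gq @: P \subset Q.
Proof. by apply/subsetP=> p /imsetP[t _ ->]; apply: gqQ. Qed.

Lemma nored (I : {set 'I_(m + q)}) (J : {set 'I_(n + q)}) :
  (forall t, (rshift m t \in I) = (rshift n t \in J)) ->
  (I != setT) || (J != setT) ->
  iU Z (UIJ Z I J) = brU Z (UIJ Z I J).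
Proof.
move=> hIJ hp.
set I1 := [set i | lshift q i \in I]; set J1 := [set j | lshift q j \in J].
set P := [set t | rshift m t \in I].
have eI : I = rowsOf (Q:=Q) I1 P.
  apply/setP=> i; case: (split_ordP i) => i' ->; first by rewrite rows_l inE.
  by rewrite rows_r inE.
have eJ : J = colsOf (Q:=Q) J1 P.
  apply/setP=> j; case: (split_ordP j) => j' ->; first by rewrite cols_l inE.
  by rewrite cols_r inE hIJ.
have eU : UIJ Z I J = UA X (Q:=Q) I1 J1 P set0 by rewrite /UA imset0 setD0 -eI -eJ.
have [f1 f2] := gadgets hQ p0 I1 J1 P set0.
rewrite set0U in f1 f2.
have [g1 g2] := gadget_base hQ I1 J1 (gqP_sub P).
rewrite eU f1 f2 g1 g2; congr (_ + _).
have [e1 e2] := subE (qmark X (gq @: P)) I1 J1.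
rewrite -e1 -e2.
case: (eqVneq P setT) => [PT|PT].
  have -> : gq @: P = Q by rewrite PT gq_img.
  apply: hmin.2.
  apply: contraTT hp; rewrite negb_or !negbK => /andP[/eqP I1T /eqP J1T].
  by rewrite eI eJ I1T J1T PT rowsT colsT !eqxx.
apply: hfirm; rewrite properEcard gqP_sub card_imset; last exact: gq_inj.
by rewrite -[X in _ < X]card_ord -cardsT proper_card // properT.
Qed.

Lemma notT_D1 (T : finType) (A : {set T}) a : (A :\ a != setT).
Proof. by apply/eqP=> e; have := in_setT a; rewrite -e !inE eqxx. Qed.

Lemma red k (I : {set 'I_(m + q)}) (J : {set 'I_(n + q)}) :
  #|I| + #|J| <= k -> (I != setT) || (J != setT) ->
  iU Z (UIJ Z I J) = brU Z (UIJ Z I J).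
Proof.
elim: k I J => [|k IH] I J hk hp.
  apply: (nored _ hp) => t.
  have /eqP I0 : #|I| == 0 by rewrite -leqn0 (leq_trans _ hk) // leq_addr.
  have /eqP J0 : #|J| == 0 by rewrite -leqn0 (leq_trans _ hk) // leq_addl.
  by rewrite (cards0_eq I0) (cards0_eq J0) !inE.
case: (boolP [exists t, (rshift m t \in I) != (rshift n t \in J)]); last first.
  move/existsPn=> h; apply: (nored _ hp) => t; apply/eqP; exact: negbNE (h t).
case/existsP=> t ht.
case rI: (rshift m t \in I); rewrite rI in ht.
- have cJ : (rshift n t \in J) = false by move: ht; case: (rshift n t \in J).
  set r := rshift m t; set c := lshift q (gq t).2.
  case kJ: (c \in J).
  + have hr : forall j, j \in J -> ~~ is0 (Z r j) -> j = c.
      move=> j jJ; rewrite is0Z negbK => /(rowR p0) [//|ej].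
      by rewrite ej cJ in jJ.
    have rc : is1 (Z r c) by rewrite is1Z (Srl X p0) eqxx.
    have [e1 e2] := row_pendant rI kJ rc hr.
    rewrite e1 e2 IH //; last by rewrite notT_D1 orbT.
    by move: hk; rewrite (cardsD1 c J) kJ add1n addnS ltnS.
  + rewrite (@UIJ_zero_row _ _ Z I J r); last first.
      move=> j jJ; rewrite is1Z; apply/negP=> /(rowR p0) [ej|ej].
        by move: kJ; rewrite /c -ej jJ.
      by rewrite ej cJ in jJ.
    apply: IH; last by rewrite notT_D1.
    by move: hk; rewrite (cardsD1 r I) rI add1n addSn ltnS.
- have cJ : (rshift n t \in J) = true by move: ht; case: (rshift n t \in J).
  set c := rshift n t; set r := lshift q (gq t).1.
  case kI: (r \in I).
  + have hc : forall i, i \in I -> ~~ is0 (Z i c) -> i = r.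
      move=> i iI; rewrite is0Z negbK => /(colR p0) [//|ei].
      by rewrite ei rI in iI.
    have rc : is1 (Z r c) by rewrite is1Z (Slr X p0) eqxx.
    have [e1 e2] := col_pendant kI cJ rc hc.
    rewrite e1 e2 IH //; last by rewrite notT_D1.
    by move: hk; rewrite (cardsD1 r I) kI add1n addSn ltnS.
  + rewrite (@UIJ_zero_col _ _ Z I J c); last first.
      move=> i iI; rewrite is1Z; apply/negP=> /(colR p0) [ei|ei].
        by move: kI; rewrite /r -ei iI.
      by rewrite ei rI in iI.
    apply: IH; last by rewrite notT_D1 orbT.
    by move: hk; rewrite (cardsD1 c J) cJ add1n addnS ltnS.
Qed.

Lemma part1 : isol_num Z < br Z.
Proof.
rewrite isol_numE brE.
have eU : supp Z = UA X (Q:=Q) setT setT setT set0.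
  by rewrite /UA imset0 setD0 rowsT colsT UIJT.
have [f1 f2] := gadgets hQ p0 setT setT setT set0.
rewrite set0U gq_img in f1 f2.
have [g1 g2] := gadget_base hQ setT setT (subxx Q).
rewrite eU f1 f2 g1 g2 !UIJT ltn_add2r.
exact: hmin.1.
Qed.
End Main.

Theorem theorem3 (m n : nat) (X : 'M[bool]_(m, n)) (Q : {set 'I_m * 'I_n}) :
  Q != set0 ->
  Q \proper bsupp X ->
  minimally_nonfirm (qmark X Q) ->
  (forall P : {set 'I_m * 'I_n}, P \proper Q -> firm (qmark X P)) ->
  minimally_nonfirm (qmark (stretch X Q) set0).
Proof.
move=> Q0 Qprop hmin hfirm.
have hQ : Q \subset bsupp X by case/andP: Qprop.
case/set0Pn: Q0 => p0 _.
split; first exact: (part1 hQ p0 hmin).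
move=> I J hp; have [e1 e2] := subE (qmark (stretch X Q) set0) I J.
rewrite e1 e2; exact: (red hQ p0 hmin hfirm (leqnn _) hp).
Qed.
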